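(* Assume, in addition to the setting described in the context (conditions (A1), (A2), (A3), (A6) and (B1)), the following: (B2) Comparability: every state in any multiple-product of the state spaces under consideration (i.e. products of copies of $\Gamma$, $\Gamma_0$, and more generally of non-extensive spaces $\Gamma_1,\dots,\Gamma_n$ of the same kind as $\Gamma$) is adiabatically comparable to every other state in the same multiple-product space. Then $S_-=S_+$, and this common function, denoted $S$, is an entropy on $\Gamma$ in the sense that for $X,Y\in\Gamma$, $X\prec Y$ if and only if $S(X)\leq S(Y)$. A change of the reference states $Z_0$ or $X_1$ amounts to a change of $S$ by an additive constant. The entropy is additive in the sense that the function defined by $S(X,Y)=S(X)+S(Y)$, with $X,Y\in\Gamma$, is an entropy on $\Gamma\times \Gamma$, and likewise $S(X,Z)=S(X)+S(Z)$ with $X\in\Gamma$, $Z\in\Gamma_0$, is an entropy on $\Gamma\times\Gamma_0$. More generally, the entropy is additive on a product of such systems $\Gamma_1\times \Gamma_2 \times \dots \times \Gamma_n$, in the sense that $S(X_1)+S(X_2) + \cdots +S(X_n)$ is an entropy on this space. Finally, the entropy is determined uniquely by these properties, up to an arbitrary additive constant. Its unit of entropy is that of $\Gamma_0$.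
   Context: $X\prec Y$ means state $Y$ can be reached from state $X$ by an adiabatic process; $X\prec\prec Y$ means $X\prec Y$ but not $Y\prec X$; $X\sim_A Y$ (adiabatic equivalence) means $X\prec Y$ and $Y\prec X$; $X,Y$ are comparable if $X\prec Y$ or $Y\prec X$. States of a product space $\Gamma_1\times\Gamma_2$ are pairs $(X_1,X_2)$; $\lambda X$ denotes a scaled copy. A cancellation law is assumed: if $(X_1,X_2)\prec(X_1,Y_2)$ then $X_2\prec Y_2$. The entropy meter $\Gamma_0$ is a normal state space of equilibrium states: there is an essentially unique additive and extensive entropy function $S$ on $\Gamma_0$ (and its scaled products) characterizing $\prec$ there, and the range of $S$ is connected (if $S(X)<S(Y)$ then every value in $[S(X),S(Y)]$ is attained by some $Z\in\Gamma_0$). The relation $\prec$ is also defined on another state space $\Gamma$ (on which scaling need not be defined) and on $\Gamma\times\Gamma_0$, satisfying: (A1) reflexivity $X\sim_A X$; (A2) transitivity; (A3) consistency: $X\prec X'$ and $Y\prec Y'$ imply $(X,Y)\prec(X',Y')$; (A6) stability with respect to $\Gamma_0$: if $(X,\varepsilon Z_0)\prec(Y,\varepsilon Z_1)$ with $Z_0,Z_1\in\Gamma_0$ for a sequence of $\varepsilon\to0$, then $X\prec Y$. Reference states $Z_0\in\Gamma_0$ and $X_1\in\Gamma$ are fixed, and it is assumed (B1): for every $X\in\Gamma$ there are $Z',Z''\in\Gamma_0$ with $(X_1,Z')\prec(X,Z_0)\prec(X_1,Z'')$. Then one defines on $\Gamma$ $S_-(X)=\sup\{S(Z') : Z'\in\Gamma_0,\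 (X_1,Z')\prec(X,Z_0)\}$ and $S_+(X)=\inf\{S(Z'') : Z''\in\Gamma_0,\ (X,Z_0)\prec(X_1,Z'')\}$. *)

(* Defs.v *)
From mathcomp Require Import all_boot all_order all_algebra.
From mathcomp Require Import boolp classical_sets reals.
Set Implicit Arguments. Unset Strict Implicit. Unset Printing Implicit Defensive.
Import Order.TTheory GRing.Theory Num.Theory.
Local Open Scope ring_scope.
Local Open Scope classical_set_scope.

Section EntropyMeters.
Context {R : realType}.

Record pos := Pos { posval :> R; posP : 0 < posval }.
Definition pos1 : pos := @Pos 1 ltr01.

Context {I : Type}.
(* Syntax of compound systems: non-extensive spaces Gamma_i (i : I), scaled
   copies Gamma_0^(t) of the entropy meter, and (binary) products. *)
Inductive sys := Base of I | Meter of pos | Prod of sys & sys.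

Context (G : I -> Type) (G0 : Type).

(* states of a compound system; a state of Meter t is t*Z with Z : G0 *)
Fixpoint state (s : sys) : Type :=
  match s with
  | Base i => G i
  | Meter _ => G0
  | Prod s1 s2 => (state s1 * state s2)%type
  end.

Definition pstate := {s : sys & state s}.
Definition pst (s : sys) (x : state s) : pstate := existT state s x.
Definition base (i : I) (x : G i) : pstate := existT state (Base i) x.
Definition meter (t : pos) (z : G0) : pstate := existT state (Meter t) z.
Definition ppair (p q : pstate) : pstate :=
  existT state (Prod (projT1 p) (projT1 q)) (projT2 p, projT2 q).

Fixpoint pure (s : sys) : bool :=
  match s with Base _ => false | Meter _ => true | Prod s1 s2 => pure s1 && pure s2 end.
Fixpoint mass (s : sys) : R :=
  match s with Base _ => 0 | Meter t => posval t | Prod s1 s2 => mass s1 + mass s2 end.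
Fixpoint plain (s : sys) : Prop :=
  match s with Base _ => True | Meter t => posval t = 1 | Prod s1 s2 => plain s1 /\ plain s2 end.

Context (S0 : G0 -> R).

Fixpoint ent0 (s : sys) : state s -> R :=
  match s return state s -> R with
  | Base _ => fun _ => 0
  | Meter t => fun z => posval t * S0 z
  | Prod s1 s2 => fun x => ent0 x.1 + ent0 x.2
  end.

Fixpoint totS (S : forall i, G i -> R) (s : sys) : state s -> R :=
  match s return state s -> R with
  | Base i => fun x => S i x
  | Meter t => fun z => posval t * S0 z
  | Prod s1 s2 => fun x => totS S x.1 + totS S x.2
  end.

Context (prec : pstate -> pstate -> Prop).

Definition adeq (p q : pstate) := prec p q /\ prec q p.

Definition A1_reflexivity := forall p, prec p p.
Definition A2_transitivity := forall p q r, prec p q -> prec q r -> prec p r.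
Definition A3_consistency :=
  forall p p' q q', prec p p' -> prec q q' -> prec (ppair p q) (ppair p' q').
Definition A6_stability :=
  forall (p q : pstate) (z0 z1 : G0),
    (forall d : R, 0 < d -> exists e : pos,
        posval e < d /\ prec (ppair p (meter e z0)) (ppair q (meter e z1))) ->
    prec p q.
Definition cancellation_law :=
  forall p q r, prec (ppair p q) (ppair p r) -> prec q r.
Definition product_identifications :=
  forall p q r, adeq (ppair p (ppair q r)) (ppair (ppair p q) r) /\
                adeq (ppair p q) (ppair q p).
(* Gamma_0 is normal: S0 is an additive and extensive entropy on Gamma_0 and
   its scaled products (compared at equal total mass) *)
Definition meter_entropy :=
  forall p q : pstate, pure (projT1 p) -> pure (projT1 q) ->
    mass (projT1 p) = mass (projT1 q) ->
    (prec p q <-> ent0 (projT2 p) <= ent0 (projT2 q)).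
Definition meter_range_connected :=
  forall z1 z2 : G0, S0 z1 < S0 z2 ->
    forall v : R, S0 z1 <= v <= S0 z2 -> exists z, S0 z = v.
Definition B2_comparability :=
  forall (s : sys) (x y : state s), prec (pst x) (pst y) \/ prec (pst y) (pst x).
Definition B1 (i : I) (z0 : G0) (x1 : G i) :=
  forall x : G i, exists z' z'' : G0,
    prec (ppair (base x1) (meter pos1 z')) (ppair (base x) (meter pos1 z0)) /\
    prec (ppair (base x) (meter pos1 z0)) (ppair (base x1) (meter pos1 z'')).

Definition Sminus (i : I) (z0 : G0) (x1 : G i) (x : G i) : R :=
  sup [set v | exists z : G0,
        prec (ppair (base x1) (meter pos1 z)) (ppair (base x) (meter pos1 z0)) /\ S0 z = v].
Definition Splus (i : I) (z0 : G0) (x1 : G i) (x : G i) : R :=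
  inf [set v | exists z : G0,
        prec (ppair (base x) (meter pos1 z0)) (ppair (base x1) (meter pos1 z)) /\ S0 z = v].

Definition is_entropy_on (s : sys) (F : state s -> R) :=
  forall x y : state s, prec (pst x) (pst y) <-> F x <= F y.

End EntropyMeters.

(* Main.v *)
Require Import Defs.
From mathcomp Require Import all_boot all_order all_algebra.
From mathcomp Require Import boolp classical_sets reals.
From mathcomp Require Import ring lra.
Import Order.TTheory GRing.Theory Num.Theory.
Local Open Scope ring_scope.
Set Implicit Arguments. Unset Strict Implicit.

Section Proofs.
Variables (R : realType) (I : Type) (G : I -> Type) (G0 : Type)
  (prec : @pstate R I G G0 -> @pstate R I G G0 -> Prop) (S0 : G0 -> R).
Hypotheses (hA1 : A1_reflexivity prec) (hA2 : A2_transitivity prec)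
  (hA3 : A3_consistency prec) (hA6 : A6_stability prec)
  (hcanc : cancellation_law prec) (hprod : product_identifications prec)
  (hmeter : meter_entropy S0 prec) (hconn : meter_range_connected S0)
  (hB2 : B2_comparability prec).

Local Notation PS := (@pstate R I G G0).
Local Notation pp := (@ppair R I G G0).
Local Notation ad := (adeq prec).

Lemma ad_refl p : ad p p. Proof. split; apply hA1. Qed.
Lemma ad_sym p q : ad p q -> ad q p. Proof. by case. Qed.
Lemma ad_trans p q r : ad p q -> ad q r -> ad p r.
Proof. case=> h1 h2 [h3 h4]; split; eapply hA2; eauto. Qed.
Lemma ad_cong p p' q q' : ad p p' -> ad q q' -> ad (pp p q) (pp p' q').
Proof. case=> h1 h2 [h3 h4]; split; apply hA3; auto. Qed.
Lemma prec_ad p p' q q' : ad p p' -> ad q q' -> prec p q -> prec p' q'.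
Proof. case=> h1 h2 [h3 h4] h. eapply hA2; [exact h2|]. eapply hA2; [exact h|exact h3]. Qed.
Lemma ad_assoc p q r : ad (pp p (pp q r)) (pp (pp p q) r). Proof. exact: (hprod p q r).1. Qed.
Lemma ad_comm p q : ad (pp p q) (pp q p). Proof. exact: (hprod p q p).2. Qed.
Lemma ad_swap4 a b c d : ad (pp (pp a b) (pp c d)) (pp (pp a c) (pp b d)).
Proof.
eapply ad_trans; [exact: (ad_sym (ad_assoc _ _ _))|].
eapply ad_trans; [exact: (ad_cong (ad_refl a) (ad_assoc _ _ _))|].
eapply ad_trans; [exact: (ad_cong (ad_refl a) (ad_cong (ad_comm b c) (ad_refl d)))|].
eapply ad_trans; [exact: (ad_cong (ad_refl a) (ad_sym (ad_assoc _ _ _)))|].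
exact: ad_assoc.
Qed.
Lemma cancel_r p q r : prec (pp q p) (pp r p) -> prec q r.
Proof. move=> h; exact: (hcanc (prec_ad (ad_comm _ _) (ad_comm _ _) h)). Qed.
Lemma add_l p q r : prec q r -> prec (pp p q) (pp p r). Proof. by move=> h; apply: hA3. Qed.
Lemma add_r p q r : prec q r -> prec (pp q p) (pp r p). Proof. by move=> h; apply: hA3. Qed.

Lemma pure_iff (s : sys) (hs : pure s) (x y : state G G0 s) :
  prec (pst x) (pst y) <-> ent0 S0 x <= ent0 S0 y.
Proof. have := @hmeter (pst x) (pst y) hs hs erefl. exact. Qed.

Lemma meter_iff a b : prec (meter G pos1 a) (meter G pos1 b) <-> S0 a <= S0 b.
Proof.
have := pure_iff (s := Meter pos1) erefl a b. by rewrite /= !mul1r.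
Qed.

Lemma meter2 (t : @pos R) (a b c d : G0) : S0 a + posval t * S0 b <= S0 c + posval t * S0 d ->
  prec (pp (meter G pos1 a) (meter G t b)) (pp (meter G pos1 c) (meter G t d)).
Proof.
move=> h. have := pure_iff (s := Prod (Meter pos1) (Meter t)) erefl (a, b) (c, d).
rewrite /= !mul1r => ->; exact h.
Qed.


Section Key.
Variables (i : I) (z0 : G0) (x1 : G i) (hB : B1 prec z0 x1).

Local Notation bs := (@base R I G G0 i).
Local Notation mt := (@meter R I G G0 pos1).

Definition Aset (x : G i) : set R := [set v | exists z : G0,
  prec (pp (bs x1) (mt z)) (pp (bs x) (mt z0)) /\ S0 z = v].
Definition Bset (x : G i) : set R := [set v | exists z : G0,
  prec (pp (bs x) (mt z0)) (pp (bs x1) (mt z)) /\ S0 z = v].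

Lemma SmE x : Sminus S0 prec z0 x1 x = sup (Aset x). Proof. by []. Qed.
Lemma SpE x : Splus S0 prec z0 x1 x = inf (Bset x). Proof. by []. Qed.

Lemma AleB x a b : Aset x a -> Bset x b -> a <= b.
Proof.
case=> za [ha <-] [zb [hb <-]].
apply/meter_iff. apply: (hcanc (p := bs x1)). exact: hA2 ha hb.
Qed.

Lemma Ane x : (Aset x !=set0)%classic.
Proof. have [z' [z'' [h1 h2]]] := hB x. by exists (S0 z'); exists z'. Qed.
Lemma Bne x : (Bset x !=set0)%classic.
Proof. have [z' [z'' [h1 h2]]] := hB x. by exists (S0 z''); exists z''. Qed.

Lemma hasA x : has_sup (Aset x).
Proof.
split; first exact: Ane. have [b Bb] := Bne x. exists b => a Aa. exact: AleB Aa Bb.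
Qed.
Lemma hasB x : has_inf (Bset x).
Proof.
split; first exact: Bne. have [a Aa] := Ane x. exists a => b Bb. exact: AleB Aa Bb.
Qed.

Lemma supA_ub x a : Aset x a -> a <= sup (Aset x).
Proof. move=> h; exact: (sup_upper_bound (hasA x) h). Qed.
Lemma infB_lb x b : Bset x b -> inf (Bset x) <= b.
Proof. move=> h; exact: (ge_inf (hasB x).2 h). Qed.

Lemma sup_le_inf x : sup (Aset x) <= inf (Bset x).
Proof.
apply: ge_sup; first exact: Ane. move=> a Aa.
apply: lb_le_inf; first exact: Bne. move=> b Bb. exact: AleB Aa Bb.
Qed.

Lemma SmSp x : Sminus S0 prec z0 x1 x = Splus S0 prec z0 x1 x.
Proof.
rewrite SmE SpE. apply: le_anti. rewrite sup_le_inf /= leNgt. apply/negP => lt.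
have [za [zb [ha hb]]] := hB x.
have hza : S0 za <= sup (Aset x) by apply: supA_ub; exists za.
have hzb : inf (Bset x) <= S0 zb by apply: infB_lb; exists zb.
set s := sup (Aset x) in hza lt *. set t := inf (Bset x) in hzb lt *.
have [z hz] : exists z, S0 z = (s + t) / 2.
  apply: (hconn (z1 := za) (z2 := zb)); first lra.
  apply/andP; split; lra.
case: (hB2 (s := Prod (Base i) (Meter pos1)) (x1, z) (x, z0)) => h.
- have : (s + t) / 2 <= s by apply: supA_ub; exists z.
  lra.
- have : t <= (s + t) / 2 by apply: infB_lb; exists z.
  lra.
Qed.


Lemma halfpos (d : R) : 0 < d -> 0 < d / 2. Proof. move=> h; lra. Qed.

Lemma repx x : exists zx, ad (pp (bs x) (mt z0)) (pp (bs x1) (mt zx)) /\ S0 zx = Sminus S0 prec z0 x1 x.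
Proof.
have eqst := SmSp x. rewrite SmE SpE in eqst.
rewrite SmE. set s := sup (Aset x) in eqst *.
have [za [zb [ha hb]]] := hB x.
have hza : S0 za <= s by apply: supA_ub; exists za.
have hzb : s <= S0 zb by rewrite eqst; apply: infB_lb; exists zb.
have [zx hzx] : exists zx, S0 zx = s.
  have [e|ne] := eqVneq (S0 za) s; first by exists za.
  apply: (hconn (z1 := za) (z2 := zb)).
    by apply: lt_le_trans hzb; rewrite lt_neqAle ne hza.
  by apply/andP.
exists zx; split => //; split.
-
  have [e|ne] := eqVneq (S0 zb) s.
    apply: hA2 hb _. apply: add_l. apply/meter_iff. by rewrite e hzx.
  have Dp : 0 < S0 zb - s by rewrite subr_gt0 lt_neqAle eq_sym ne hzb.
  apply: (hA6 (z0 := zx) (z1 := zb)) => d hd.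
  exists (Pos (halfpos hd)); split; first by rewrite /=; lra.
  set e := Pos (halfpos hd).
  have ep : 0 < posval e by exact: halfpos.
  have [b' [zb' [hb' <-]] lb'] := inf_adherent (mulr_gt0 ep Dp) (hasB x).
  rewrite -eqst in lb'.
  apply: hA2 (add_r _ hb') _.
  apply: hA2 ((ad_sym (ad_assoc _ _ _)).1) _.
  apply: hA2 _ (ad_assoc _ _ _).1.
  apply: add_l. apply: meter2. rewrite hzx. rewrite mulrBr in lb'. lra.
-
  have [e|ne] := eqVneq (S0 za) s.
    apply: hA2 _ ha. apply: add_l. apply/meter_iff. by rewrite e hzx.
  have Dp : 0 < s - S0 za by rewrite subr_gt0 lt_neqAle ne hza.
  apply: (hA6 (z0 := za) (z1 := zx)) => d hd.
  exists (Pos (halfpos hd)); split; first by rewrite /=; lra.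
  set e := Pos (halfpos hd).
  have ep : 0 < posval e by exact: halfpos.
  have [a' [za' [ha' <-]] la'] := sup_adherent (mulr_gt0 ep Dp) (hasA x).
  apply: hA2 ((ad_sym (ad_assoc _ _ _)).1) _.
  apply: hA2 _ (add_r _ ha').
  apply: hA2 _ (ad_assoc _ _ _).1.
  apply: add_l. apply: meter2. rewrite hzx. change (sup (Aset x)) with s in la'. rewrite mulrBr in la'. lra.
Qed.

End Key.

Definition Rep (s : sys) (T : state G G0 s -> R) :=
  exists (r c : PS) (Q : sys) (m : state G G0 s -> state G G0 Q) (K : R),
    pure Q /\ forall x, ad (pp (pst x) c) (pp r (pst (m x))) /\ ent0 S0 (m x) = T x + K.

Lemma rep_entropy (s : @sys R I) (T : state G G0 s -> R) : Rep T -> is_entropy_on prec T.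
Proof.
case=> r [c [Q [m [K [hQ h]]]]] x y.
have [hx ex] := h x. have [hy ey] := h y.
rewrite -(lerD2r K) -ex -ey -pure_iff //. split => H.
- apply: (hcanc (p := r)). apply: prec_ad hx hy _. exact: add_r.
- apply: (@cancel_r c). apply: prec_ad (ad_sym hx) (ad_sym hy) _. exact: add_l.
Qed.

Lemma ent_ext (s : @sys R I) (F F' : state G G0 s -> R) :
  is_entropy_on prec F -> (forall x, F x = F' x) -> is_entropy_on prec F'.
Proof. move=> h e x y. by rewrite -!e. Qed.

Lemma rep_prod (s1 s2 : @sys R I) (T1 : state G G0 s1 -> R) (T2 : state G G0 s2 -> R) : @Rep s1 T1 -> @Rep s2 T2 ->
  @Rep (Prod s1 s2) (fun x => T1 x.1 + T2 x.2).
Proof.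
case=> r1 [c1 [Q1 [m1 [K1 [hQ1 h1]]]]] [r2 [c2 [Q2 [m2 [K2 [hQ2 h2]]]]]].
exists (pp r1 r2), (pp c1 c2), (Prod Q1 Q2), (fun x => (m1 x.1, m2 x.2)), (K1 + K2).
split; first by rewrite /= hQ1 hQ2.
case=> a b. have [ha ea] := h1 a. have [hb eb] := h2 b. split.
- eapply ad_trans; first exact: (ad_swap4 (pst a) (pst b) c1 c2).
  eapply ad_trans; first exact: (ad_cong ha hb).
  exact: ad_swap4.
- rewrite /= ea eb. lra.
Qed.

Lemma rep_meter (t : @pos R) (z : G0) :
  @Rep (Meter t) (fun w => posval t * S0 w).
Proof.
exists (meter G t z), (meter G t z), (Meter t), id, 0.
split => // w; split; first exact: ad_comm. by rewrite /= addr0.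
Qed.

Lemma rep_base i (F : G i -> R) (z0 : G0) (x1 : G i) :
  (forall x, exists zx, ad (pp (base G0 x) (meter G pos1 z0)) (pp (base G0 x1) (meter G pos1 zx))
     /\ S0 zx = F x) -> @Rep (Base i) F.
Proof.
move=> h. have [m hm] := choice h.
exists (base G0 x1), (meter G pos1 z0), (Meter pos1), m, 0.
split => // x; have [h1 h2] := hm x; split; first exact: h1.
by rewrite /= mul1r h2 addr0.
Qed.

Lemma rep_all (S : forall i, G i -> R) : (forall i, @Rep (Base i) (S i)) ->
  forall s (x0 : state G G0 s), @Rep s (totS S0 S (s := s)).
Proof.
move=> HS; elim => [i|t|s1 IH1 s2 IH2] x0.
- exact: HS.
- exact: rep_meter.
- case: x0 => a b. exact: rep_prod (IH1 a) (IH2 b).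
Qed.

Lemma uniq_ent i (z0 : G0) (x1 : G i) (S : G i -> R) (F : G i -> R) :
  (forall x, exists zx, ad (pp (base G0 x) (meter G pos1 z0)) (pp (base G0 x1) (meter G pos1 zx))
     /\ S0 zx = S x) ->
  is_entropy_on prec (s := Prod (Base i) (Meter pos1)) (fun xz => F xz.1 + S0 xz.2) ->
  exists c : R, forall x : G i, F x = S x + c.
Proof.
move=> h FS. exists (F x1 - S0 z0) => x.
have [zx [[h1 h2] e]] := h x.
have l1 := (FS (x, z0) (x1, zx)).1 h1.
have l2 := (FS (x1, zx) (x, z0)).1 h2.
rewrite /= in l1 l2. rewrite -e. lra.
Qed.

End Proofs.

Theorem theorem1 (R : realType) (I : Type) (G : I -> Type) (G0 : Type)
  (prec : @pstate R I G G0 -> @pstate R I G G0 -> Prop)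
  (S0 : G0 -> R) (Z0 : I -> G0) (X1 : forall i, G i)
  (hA1 : A1_reflexivity prec) (hA2 : A2_transitivity prec)
  (hA3 : A3_consistency prec) (hA6 : A6_stability prec)
  (hcanc : cancellation_law prec) (hprod : product_identifications prec)
  (hmeter : meter_entropy S0 prec) (hconn : meter_range_connected S0)
  (hB1 : forall i, B1 prec (Z0 i) (X1 i))
  (hB2 : B2_comparability prec) :
  let S := fun i => Sminus S0 prec (Z0 i) (X1 i) in
  (forall i (x : G i), Sminus S0 prec (Z0 i) (X1 i) x = Splus S0 prec (Z0 i) (X1 i) x) /\
  (forall i, is_entropy_on prec (s := Base i) (S i)) /\
  (forall i (z0' : G0) (x1' : G i), B1 prec z0' x1' ->
     exists c : R, forall x : G i, Sminus S0 prec z0' x1' x = S i x + c) /\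
  (forall i, is_entropy_on prec (s := Prod (Base i) (Base i))
                (fun xy => S i xy.1 + S i xy.2)) /\
  (forall i, is_entropy_on prec (s := Prod (Base i) (Meter pos1))
                (fun xz => S i xz.1 + S0 xz.2)) /\
  (forall s : sys, plain s -> is_entropy_on prec (totS S0 S (s := s))) /\
  (forall i (F : G i -> R),
     is_entropy_on prec (s := Base i) F ->
     is_entropy_on prec (s := Prod (Base i) (Meter pos1)) (fun xz => F xz.1 + S0 xz.2) ->
     exists c : R, forall x : G i, F x = S i x + c).
Proof.
move=> S.
have key := fun i => repx hA1 hA2 hA3 hA6 hcanc hprod hmeter hconn hB2 (hB1 i).
have HS : forall i, Rep prec S0 (s := Base i) (S i) := fun i => rep_base (key i).
have HA := rep_all hA1 hA2 hA3 hprod HS.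
have RE := rep_entropy hA1 hA2 hA3 hcanc hprod hmeter.
have RP := rep_prod (S0 := S0) hA1 hA2 hA3 hprod.
have RM := rep_meter S0 hprod.
split; first by move=> i x; exact: SmSp.
split; first by move=> i; exact: RE _ _ (HS i).
split.
  move=> i z0' x1' hB'.
  have key' := repx hA1 hA2 hA3 hA6 hcanc hprod hmeter hconn hB2 hB'.
  apply: uniq_ent (key i) _.
  apply: ent_ext (RE _ _ (RP _ _ _ _ (rep_base key') (RM pos1 z0'))) _.
  by case=> a b /=; rewrite mul1r.
split; first by move=> i; exact: RE _ _ (HA (Prod (Base i) (Base i)) (X1 i, X1 i)).
split.
  move=> i. apply: ent_ext (RE _ _ (HA (Prod (Base i) (Meter pos1)) (X1 i, Z0 i))) _.
  by case=> a b /=; rewrite mul1r.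
split; first by move=> s _ x y; exact: (RE _ _ (HA s x)).
move=> i F _ FS. exact: uniq_ent (key i) FS.
Qed.
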